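(* Let $\alpha$ be an automorphism of a group $C$ with $\alpha^2=1$. If $Z^1_\alpha(C)$ is 2-divisible, then $H^1_\alpha(C)=\{1\}$. If $C$ is strongly 2-divisible, then $Z^1_\alpha(C)$ is also strongly 2-divisible, and consequently $H^1_\alpha(C)=\{1\}$.
   Context: A subset $S$ of a group is 2-divisible if every $s\in S$ equals $t^2$ for some $t\in S$; a group $C$ is strongly 2-divisible if every element has a unique square root in $C$. $Z^1_\alpha(C)=\{z\in C:\alpha(z)=z^{-1}\}$ and $H^1_\alpha(C)$ is the set of $C$-orbits in $Z^1_\alpha(C)$ under $x\cdot z=xz\alpha(x)^{-1}$; $H^1_\alpha(C)=\{1\}$ means $Z^1_\alpha(C)=\{y\alpha(y)^{-1}:y\in C\}$. *)

(* Defs.v *)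
Set Implicit Arguments.

Record is_group (C : Type) (mul : C -> C -> C) (one : C) (inv : C -> C) : Prop := {
  grp_assoc : forall x y z, mul x (mul y z) = mul (mul x y) z;
  grp_mul1l : forall x, mul one x = x;
  grp_mul1r : forall x, mul x one = x;
  grp_mulVl : forall x, mul (inv x) x = one;
  grp_mulVr : forall x, mul x (inv x) = one
}.

Definition is_automorphism (C : Type) (mul : C -> C -> C) (alpha : C -> C) : Prop :=
  (forall x y, alpha (mul x y) = mul (alpha x) (alpha y)) /\
  (forall x y, alpha x = alpha y -> x = y) /\
  (forall y, exists x, alpha x = y).

Definition two_divisible (C : Type) (mul : C -> C -> C) (S : C -> Prop) : Prop :=
  forall s, S s -> exists t, S t /\ s = mul t t.

Definition strongly_two_divisible_set (C : Type) (mul : C -> C -> C) (S : C -> Prop) : Prop :=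
  forall s, S s -> exists! t, S t /\ mul t t = s.

Definition strongly_two_divisible (C : Type) (mul : C -> C -> C) : Prop :=
  forall c, exists! t, mul t t = c.

Definition Z1 (C : Type) (inv : C -> C) (alpha : C -> C) (z : C) : Prop :=
  alpha z = inv z.

Definition H1_trivial (C : Type) (mul : C -> C -> C) (inv : C -> C) (alpha : C -> C) : Prop :=
  forall z, Z1 inv alpha z -> exists y, z = mul y (inv (alpha y)).

(* Main.v *)
Require Import Defs.

Section G.
Variables (C : Type) (mul : C -> C -> C) (one : C) (inv : C -> C).
Hypothesis HG : is_group mul one inv.

Lemma inv_uniq a b : mul a b = one -> a = inv b.
Proof.
  intro H. rewrite <- (grp_mul1r HG a), <- (grp_mulVr HG b), (grp_assoc HG), H.
  apply (grp_mul1l HG).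
Qed.

Lemma invK a : inv (inv a) = a.
Proof. symmetry. apply inv_uniq. apply (grp_mulVr HG). Qed.

Lemma invM a b : inv (mul a b) = mul (inv b) (inv a).
Proof.
  symmetry. apply inv_uniq.
  rewrite <- (grp_assoc HG), (grp_assoc HG (inv a)), (grp_mulVl HG), (grp_mul1l HG).
  apply (grp_mulVl HG).
Qed.

Lemma cancel_l a b : mul a b = a -> b = one.
Proof.
  intro H. rewrite <- (grp_mul1l HG b), <- (grp_mulVl HG a), <- (grp_assoc HG), H.
  reflexivity.
Qed.

Variable alpha : C -> C.
Hypothesis Ha : is_automorphism mul alpha.

Lemma alpha1 : alpha one = one.
Proof.
  destruct Ha as [Hm _]. apply (@cancel_l (alpha one)).
  rewrite <- Hm, (grp_mul1l HG). reflexivity.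
Qed.

Lemma alphaV x : alpha (inv x) = inv (alpha x).
Proof.
  destruct Ha as [Hm _]. apply inv_uniq. rewrite <- Hm, (grp_mulVl HG). apply alpha1.
Qed.
End G.

Theorem lemma2p11 (C : Type) (mul : C -> C -> C) (one : C) (inv : C -> C)
  (HG : is_group mul one inv) (alpha : C -> C)
  (Halpha : is_automorphism mul alpha)
  (Halpha2 : forall x, alpha (alpha x) = x) :
  (two_divisible mul (Z1 inv alpha) -> H1_trivial mul inv alpha) /\
  (strongly_two_divisible mul ->
     strongly_two_divisible_set mul (Z1 inv alpha) /\ H1_trivial mul inv alpha).
Proof.
  assert (P1 : two_divisible mul (Z1 inv alpha) -> H1_trivial mul inv alpha).
  { intros Hd z Hz. destruct (Hd z Hz) as [t [Ht ->]]. exists t.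
    unfold Z1 in Ht. rewrite Ht, (invK _ _ _ _ HG). reflexivity. }
  split; [exact P1|].
  intros Hs.
  assert (P2 : strongly_two_divisible_set mul (Z1 inv alpha)).
  { intros z Hz. destruct (Hs z) as [t [Ht Hu]]. exists t. split.
    - split; [|exact Ht].
      unfold Z1. assert (E : inv (alpha t) = t).
      { symmetry. apply Hu. rewrite <- (invM _ _ _ _ HG), <- (proj1 Halpha), Ht. unfold Z1 in Hz.
        rewrite Hz. apply (invK _ _ _ _ HG). }
      pattern t at 2; rewrite <- E. rewrite (invK _ _ _ _ HG). reflexivity.
    - intros t' [_ H']. apply Hu. exact H'. }
  split; [exact P2|]. apply P1.
  intros z Hz. destruct (P2 z Hz) as [t [[Ht Ht2] _]]. exists t. auto.
Qed.
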